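(* Let $G_1$ and $G_2$ be two vertex-disjoint finite simple graphs, each having at least one edge. Then $\mathcal{NC}(G_1\sqcup G_2)$ is not shellable, and hence not vertex decomposable.
   Context: For a finite simple graph $H$, the non-cover complex $\mathcal{NC}(H)$ is the simplicial complex whose simplices are the subsets $S\subseteq V(H)$ such that $V(H)\setminus S$ contains both endpoints of some edge of $H$. A simplicial complex $K$ is shellable if its facets (maximal simplices) can be ordered $F_1,\dots,F_t$ so that for each $k=2,\dots,t$ the complex $\big(\bigcup_{j<k}\Delta^{F_j}\big)\cap\Delta^{F_k}$ is pure of dimension $\dim(\Delta^{F_k})-1$, where $\Delta^F$ denotes the full simplex on $F$. For a simplicial complex $K$ and a vertex $v$, $\mathrm{lk}(v,K)=\{\tau\in K: v\notin\tau,\ \tau\cup\{v\}\in K\}$ and $\mathrm{del}(v,K)=\{\tau\in K: v\notin\tau\}$. $K$ is vertex decomposable if $K$ is a simplex (including $\{\emptyset\}$), or $K$ has a vertex $v$ such that $\mathrm{lk}(v,K)$ and $\mathrm{del}(v,K)$ are vertex decomposable and every facet of $\mathrm{del}(v,K)$ is a facet of $K$. *)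

(* Defs.v *)
From mathcomp Require Import all_boot.
Set Implicit Arguments. Unset Strict Implicit. Unset Printing Implicit Defensive.

Definition simple_graph (T : finType) (e : rel T) : Prop :=
  symmetric e /\ irreflexive e.

Definition has_edge (T : finType) (e : rel T) : Prop := exists x y, e x y.

Definition sum_rel (T1 T2 : finType) (e1 : rel T1) (e2 : rel T2) : rel (T1 + T2) :=
  fun u v => match u, v with
             | inl a, inl b => e1 a b
             | inr a, inr b => e2 a b
             | _, _ => false
             end.

Definition complex (T : finType) := {set {set T}}.

Definition non_cover_complex (T : finType) (e : rel T) : complex T :=
  [set S : {set T} | [exists x, exists y, [&& e x y, x \notin S & y \notin S]]].

Definition facet (T : finType) (K : complex T) (F : {set T}) : Prop :=
  F \in K /\ forall G, G \in K -> F \subset G -> G = F.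

Definition full_simplex (T : finType) (F : {set T}) : complex T := powerset F.

(* K is pure of dimension d (given as cardinality d+1 = n): every facet has n vertices. *)
Definition pure_card (T : finType) (K : complex T) (n : nat) : Prop :=
  forall F, facet K F -> #|F| = n.

Definition prev_intersection (T : finType) (s : seq {set T}) (k : nat) : complex T :=
  [set t : {set T} | (t \subset nth set0 s k) &&
                     [exists j : 'I_k, t \subset nth set0 s j]].

(* Shellable: an ordering F_1..F_t of all facets (each exactly once) such that for
   k >= 2 the complex (U_{j<k} Delta^{F_j}) cap Delta^{F_k} is pure of dimension
   dim F_k - 1, i.e. all its facets have #|F_k| - 1 vertices (indices 0-based). *)
Definition shellable (T : finType) (K : complex T) : Prop :=
  exists s : seq {set T},
    [/\ uniq s,
        (forall F, F \in s <-> facet K F) &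
        forall k, 0 < k < size s ->
          forall G, facet (prev_intersection s k) G ->
            (#|G|.+1 = #|nth set0 s k|)%N].

Definition link (T : finType) (v : T) (K : complex T) : complex T :=
  [set t in K | (v \notin t) && (v |: t \in K)].

Definition deletion (T : finType) (v : T) (K : complex T) : complex T :=
  [set t in K | v \notin t].

Inductive vertex_decomposable (T : finType) : complex T -> Prop :=
| vd_simplex (F : {set T}) : vertex_decomposable (full_simplex F)
| vd_step (K : complex T) (v : T) :
    [set v] \in K ->
    vertex_decomposable (link v K) ->
    vertex_decomposable (deletion v K) ->
    (forall F, facet (deletion v K) F -> facet K F) ->
    vertex_decomposable K.

(* Main.v *)
Require Import Defs.
From mathcomp Require Import all_boot.
From mathcomp Require Import zify.

Set Implicit Arguments. Unset Strict Implicit. Unset Printing Implicit Defensive.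

Lemma in_set3 (T : finType) (z v x y : T) :
  (z \in [set v; x; y]) = [|| z == v, z == x | z == y].
Proof. by rewrite !in_setU !in_set1 orbA. Qed.

Section Gen.
Variable (T : finType) (e : rel T).

Lemma facet_form F : facet (non_cover_complex e) F ->
  exists x y, e x y /\ F = ~:[set x; y].
Proof.
case=> FK max; move: (FK); rewrite inE => /existsP[x /existsP[y /and3P[exy xF yF]]].
exists x, y; split=> //; symmetry; apply: max.
  rewrite inE; apply/existsP; exists x; apply/existsP; exists y.
  by rewrite exy !in_setC !in_set2 !eqxx orbT.
apply/subsetP=> z zF; rewrite in_setC in_set2; apply/negP => /orP[]/eqP ez;
  by rewrite -ez zF in xF yF.
Qed.

Lemma facet_of x y : irreflexive e -> e x y -> facet (non_cover_complex e) (~:[set x; y]).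
Proof.
move=> irr exy; split.
  rewrite inE; apply/existsP; exists x; apply/existsP; exists y.
  by rewrite exy !in_setC !in_set2 !eqxx orbT.
move=> G; rewrite inE => /existsP[p /existsP[q /and3P[epq pG qG]]] sub.
have inxy z : z \notin G -> z \in [set x; y].
  move=> zG; apply: contraR zG => zn; apply: (subsetP sub); by rewrite in_setC.
have pq : p != q by apply/eqP => epq'; rewrite epq' irr in epq.
have [xG yG] : x \notin G /\ y \notin G.
  move: (inxy _ pG) (inxy _ qG); rewrite !in_set2.
  move=> /orP[]/eqP ep /orP[]/eqP eq; subst; try by rewrite eqxx in pq.
  - by split.
  - by split.
apply/eqP; rewrite eqEsubset sub andbT; apply/subsetP=> z zG.
rewrite in_setC in_set2; apply/negP => /orP[]/eqP ez; subst;
  by [rewrite zG in xG | rewrite zG in yG].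
Qed.

Lemma not_vd : irreflexive e ->
  (forall v, exists x y, [/\ e x y, v != x, v != y, ~~ e v x & ~~ e v y]
            /\ ~~ e x v /\ ~~ e y v) ->
  ~ vertex_decomposable (non_cover_complex e).
Proof.
move=> irr H VD.
suff : forall K, vertex_decomposable K -> K = non_cover_complex e -> False.
  by move=> /(_ _ VD erefl).
move=> K [F|K' v vK _ _ fac] E.
  have : F \in full_simplex F by rewrite /full_simplex powersetE.
  rewrite E inE => /existsP[p /existsP[q /and3P[epq pF qF]]].
  have [x [y [[exy px py _ _] _]]] := H p.
  have : ~:[set x; y] \in full_simplex F.
    rewrite E; exact: (facet_of irr exy).1.
  rewrite /full_simplex powersetE => /subsetP /(_ p).
  rewrite in_setC in_set2 negb_or px py => /(_ isT).
  by rewrite (negbTE pF).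
subst K'.
have [x [y [[exy vx vy nvx nvy] [nxv nyv]]]] := H v.
set t := ~:[set v; x; y].
have tK : t \in non_cover_complex e.
  rewrite inE; apply/existsP; exists x; apply/existsP; exists y.
  by rewrite exy !in_setC !in_set3 !eqxx !orbT.
have ft : facet (deletion v (non_cover_complex e)) t.
  split; first by rewrite inE tK in_setC in_set3 eqxx.
  move=> G; rewrite inE => /andP[GK vG] sub.
  move: GK; rewrite inE => /existsP[p /existsP[q /and3P[epq pG qG]]].
  have in3 z : z \notin G -> z \in [set v; x; y].
    move=> zG; apply: contraR zG => zn; apply: (subsetP sub); by rewrite in_setC.
  have [xG yG] : x \notin G /\ y \notin G.
    have h1 := in3 _ pG; have h2 := in3 _ qG.
    move: h1 h2 epq pG qG; rewrite !in_set3.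
    move=> /or3P[]/eqP-> /or3P[]/eqP-> epq pG qG;
      by [split | rewrite ?irr ?(negbTE nvx) ?(negbTE nvy) ?(negbTE nxv) ?(negbTE nyv) in epq].
  apply/eqP; rewrite eqEsubset sub andbT; apply/subsetP=> z zG.
  rewrite in_setC in_set3; apply/negP => /or3P[]/eqP ez; move: zG; rewrite ez => zG;
    by [rewrite zG in vG | rewrite zG in xG | rewrite zG in yG].
have [_ max] := fac _ ft.
have := max _ (facet_of irr exy).1.
have sub : t \subset ~:[set x; y].
  apply/subsetP=> z; rewrite !in_setC !in_set3 in_set2 !negb_or.
  by case/and3P=> _ -> ->.
move=> /(_ sub) /setP /(_ v).
by rewrite !in_setC in_set2 in_set3 eqxx negb_or vx vy.
Qed.

Lemma card_cross (x y p q : T) : x != y -> x \notin [set p; q] -> y \notin [set p; q] ->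
  #|~:[set x; y] :&: ~:[set p; q]|.+2 = #|~:[set p; q]|.
Proof.
move=> xy xn yn; set B := ~:[set p; q].
rewrite -(cardsID [set x; y] B).
have -> : B :&: [set x; y] = [set x; y].
  apply/setIidPr; apply/subsetP=> z; rewrite in_set2 => /orP[]/eqP->;
  by rewrite in_setC.
have -> : ~:[set x; y] :&: B = B :\: [set x; y] by rewrite setDE setIC.
by rewrite cards2 xy add2n.
Qed.

End Gen.

Section Sum.
Variables (T1 T2 : finType) (e1 : rel T1) (e2 : rel T2).

Definition side (F : {set T1 + T2}) := [exists a : T1, inl a \notin F].

Lemma sum_facet F : facet (non_cover_complex (sum_rel e1 e2)) F ->
  (exists a b, e1 a b /\ F = ~:[set inl a; inl b]) \/
  (exists c d, e2 c d /\ F = ~:[set inr c; inr d]).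
Proof.
move=> /facet_form [x [y [exy ->]]]; case: x y exy => x [] y //= exy.
- by left; exists x, y.
- by right; exists x, y.
Qed.

Lemma side_l a b : side (~:[set inl a; inl b]) = true.
Proof. by apply/existsP; exists a; rewrite in_setC in_set2 eqxx. Qed.

Lemma side_r c d : side (~:[set inr c; inr d]) = false.
Proof. by apply/existsP => -[a]; rewrite in_setC in_set2. Qed.

Lemma cross A B : irreflexive e1 -> irreflexive e2 ->
  facet (non_cover_complex (sum_rel e1 e2)) A ->
  facet (non_cover_complex (sum_rel e1 e2)) B ->
  side A != side B -> #|A :&: B|.+2 = #|B|.
Proof.
move=> i1 i2 /sum_facet [[a [b [eab ->]]]|[a [b [eab ->]]]]
  /sum_facet [[c [d [ecd ->]]]|[c [d [ecd ->]]]];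
  rewrite ?side_l ?side_r // => _.
- apply: card_cross; rewrite ?in_set2 //.
  by apply/eqP=> -[h]; rewrite h i1 in eab.
- apply: card_cross; rewrite ?in_set2 //.
  by apply/eqP=> -[h]; rewrite h i2 in eab.
Qed.

End Sum.

Theorem proposition4p4 (T1 T2 : finType) (e1 : rel T1) (e2 : rel T2) :
  simple_graph e1 -> simple_graph e2 ->
  has_edge e1 -> has_edge e2 ->
  ~ shellable (non_cover_complex (sum_rel e1 e2)) /\
  ~ vertex_decomposable (non_cover_complex (sum_rel e1 e2)).
Proof.
move=> [sym1 irr1] [sym2 irr2] [a [b eab]] [c [d ecd]].
have irr : irreflexive (sum_rel e1 e2) by case=> x /=.
split; last first.
  apply: not_vd => // -[v|v].
    by exists (inr c), (inr d).
  by exists (inl a), (inl b).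
move=> [s [us hs hk]].
have f1 : facet (non_cover_complex (sum_rel e1 e2)) (~:[set inl a; inl b]).
  exact: facet_of.
have f2 : facet (non_cover_complex (sum_rel e1 e2)) (~:[set inr c; inr d]).
  exact: facet_of.
set s0 := nth set0 s 0.
pose P := fun F : {set T1 + T2} => side F != side s0.
have hasP : has P s.
  apply/hasP; have [h|h] := boolP (side s0).
    by exists (~:[set inr c; inr d]); [apply/hs | rewrite /P side_r h].
  by exists (~:[set inl a; inl b]); [apply/hs | rewrite /P side_l (negbTE h)].
set k := find P s.
have ks : k < size s by rewrite -has_find.
have Pk := nth_find set0 hasP; rewrite -/k in Pk.
have k0 : 0 < k.
  rewrite lt0n; apply/negP => /eqP k0'.
  by move: Pk; rewrite k0' /P eqxx.
have before j : j < k -> side (nth set0 s j) = side s0.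
  by move/(before_find set0); rewrite /P => /negPn/eqP.
have fn j : j < size s -> facet (non_cover_complex (sum_rel e1 e2)) (nth set0 s j).
  by move=> js; apply/hs; apply: mem_nth.
set Fk := nth set0 s k.
have cG0 : #|s0 :&: Fk|.+2 = #|Fk|.
  by apply: cross => //; [apply: fn; apply: leq_trans ks | apply: fn | rewrite eq_sym].
have fG0 : facet (prev_intersection s k) (s0 :&: Fk).
  split.
    rewrite inE subsetIr /=; apply/existsP; exists (Ordinal k0); by rewrite subsetIl.
  move=> G; rewrite inE => /andP[GFk /existsP[j Gj]] sub.
  have cj : #|nth set0 s j :&: Fk|.+2 = #|Fk|.
    apply: cross => //; first (apply: fn; exact: ltn_trans (ltn_ord j) ks).
      by apply: fn.
    by rewrite before // eq_sym.
  have : #|G| <= #|nth set0 s j :&: Fk|.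
    by apply: subset_leq_card; rewrite subsetI Gj GFk.
  have ee : #|nth set0 s j :&: Fk| = #|s0 :&: Fk|.
    by apply/succn_inj/succn_inj; rewrite cj cG0.
  move=> le; apply/eqP; rewrite eq_sym eqEcard sub /= -ee //.
have := hk k; rewrite k0 ks => /(_ isT _ fG0).
rewrite -/Fk -cG0 => /succn_inj /n_Sn //.
Qed.
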